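(* For every $p\ge0$, $m,n\ge0$ with $m+n\ge1$, and $k_1,\dots,k_m,\ell_1,\dots,\ell_n\ge0$, the open correlator $\langle\tau_{k_1}\cdots\tau_{k_m}\sigma_{\ell_1}\cdots\sigma_{\ell_n}\rangle^o_p$ vanishes unless $$k_1+\dots+k_m+\ell_1+\dots+\ell_n-m-\frac n2=\frac32(p-1).$$ Equivalently, for all $p\ge0$, $\sum_{k\ge0}\big((k-1)t_k\partial_{t_k}+(k-\tfrac12)s_k\partial_{s_k}\big)\mathcal F^o_p=\tfrac32(p-1)\mathcal F^o_p$.
   Context: The Burgers–KdV differential polynomials: $K_0=w$, $R_0=\rho$, $Q_0=w+\frac{\rho^2}2+\frac\epsilon2\rho_x$, $\partial_xK_n=\frac2{2n+1}(w\partial_x+\frac12w_x+\frac{\epsilon^2}8\partial_x^3)K_{n-1}$ (zero integration constant), $R_n=\frac2{2n+1}\big((w+\frac{\rho^2}2+\epsilon(\frac{\rho_x}2+\rho\partial_x)+\frac{\epsilon^2}2\partial_x^2)R_{n-1}+(\frac\rho2+\frac34\epsilon\partial_x)K_{n-1}\big)$, $Q_n=\frac1{n+1}(w+\frac{\rho^2}2+\epsilon(\frac{\rho_x}2+\rho\partial_x)+\frac{\epsilon^2}2\partial_x^2)Q_{n-1}$. Let $(w_{\rm top},\rho_{\rm top})$ solve $\partial_{t_n}w=\partial_xK_n$, $\partial_{t_n}\rho=\partial_xR_n$, $\partial_{s_n}w=0$, $\partial_{s_n}\rho=\partial_xQ_n$ ($t_0=x$) with $(w,\rho)|_{t_n=x\delta_{n,0},s=0}=(x,0)$,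 and let $\log\tau_2=\sum_{p\ge0}\epsilon^{p-1}\mathcal F^o_p(\mathbf t,\mathbf s)$ be defined by $\epsilon\partial_{t_n}\log\tau_2=R_n(w_{\rm top},\rho_{\rm top};\epsilon)$, $\epsilon\partial_{s_n}\log\tau_2=Q_n(w_{\rm top},\rho_{\rm top};\epsilon)$, normalized by $\mathcal F^o_p(\mathbf 0,\mathbf 0)=0$. The open correlators are the Taylor coefficients $\mathcal F^o_p=\sum_{m,n\ge0}\sum_{k_i,\ell_j\ge0}\frac{\langle\tau_{k_1}\cdots\tau_{k_m}\sigma_{\ell_1}\cdots\sigma_{\ell_n}\rangle^o_p}{m!\,n!}t_{k_1}\cdots t_{k_m}s_{\ell_1}\cdots s_{\ell_n}$ (symmetric in the $\tau$'s and in the $\sigma$'s). *)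

(* Defs.v *)
From mathcomp Require Import all_boot all_order all_algebra.
Set Implicit Arguments. Unset Strict Implicit. Unset Printing Implicit Defensive.
Import Order.TTheory GRing.Theory Num.Theory.
Local Open Scope ring_scope.

(* Monomials in countably many variables X_0, X_1, ... : an exponent  *)
(* sequence m (exponent of X_i is nth 0 m i).  Trailing zeros are      *)
(* irrelevant; mtrim removes them (canonical representative).          *)
Fixpoint mtrim (m : seq nat) : seq nat :=
  if m is x :: s then
    let t := mtrim s in if (x == 0%N) && (t == [::]) then [::] else x :: t
  else [::].

Fixpoint mdivs (m : seq nat) : seq (seq nat) :=
  if m is x :: s then [seq i :: a | i <- iota 0 x.+1, a <- mdivs s]
  else [:: [::]].

Definition msub (m a : seq nat) : seq nat := [seq (x.1 - x.2)%N | x <- zip m a].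
Definition madd (m a : seq nat) : seq nat :=
  mkseq (fun i => (nth 0 m i + nth 0 a i)%N) (maxn (size m) (size a)).
Definition mvar (i : nat) : seq nat := incr_nth [::] i.

(* Formal power series over Q in X_0, X_1, ...: coefficient functions. *)
(* Only values at trimmed monomials are ever read.                     *)
Definition ps := seq nat -> rat.
Definition ps_eq (f g : ps) : Prop := forall m, f (mtrim m) = g (mtrim m).
Definition ps_const (c : rat) : ps := fun m => if mtrim m == [::] then c else 0.
Definition ps_var (i : nat) : ps := fun m => if mtrim m == mvar i then 1 else 0.
Definition ps_add (f g : ps) : ps := fun m => f (mtrim m) + g (mtrim m).
Definition ps_scale (c : rat) (f : ps) : ps := fun m => c * f (mtrim m).
Definition ps_mul (f g : ps) : ps := fun m =>
  \sum_(a <- mdivs (mtrim m)) f (mtrim a) * g (mtrim (msub (mtrim m) a)).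
Definition ps_pow (f : ps) (n : nat) : ps := iter n (ps_mul f) (ps_const 1).
Definition ps_deriv (i : nat) (f : ps) : ps := fun m =>
  (nth 0 (mtrim m) i).+1%:R * f (mtrim (incr_nth (mtrim m) i)).

(* Variables of the (t,s,eps) series: eps = X_0, t_k = X_(2k+1), s_k = X_(2k+2).
   Jet variables of differential polynomials: eps = X_0,
   w^(i) = d_x^i w = X_(2i+1), rho^(i) = d_x^i rho = X_(2i+2). *)
Definition veps : nat := 0.
Definition vt (k : nat) : nat := (2 * k + 1)%N.
Definition vs (k : nat) : nat := (2 * k + 2)%N.
Definition vw (i : nat) : nat := (2 * i + 1)%N.
Definition vrho (i : nat) : nat := (2 * i + 2)%N.

(* Differential polynomials in w, rho with coefficients in Q[eps]:     *)
(* finite lists of terms (coefficient, monomial in the jet variables). *)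
Definition dpoly := seq (rat * seq nat).
Definition dp_coef (P : dpoly) (m : seq nat) : rat :=
  \sum_(x <- P | mtrim x.2 == mtrim m) x.1.
Definition dp_eq (P Q : dpoly) : Prop := forall m, dp_coef P m = dp_coef Q m.
Definition dp_const (c : rat) : dpoly := [:: (c, [::])].
Definition dp_var (i : nat) : dpoly := [:: (1, mvar i)].
Definition dp_add (P Q : dpoly) : dpoly := P ++ Q.
Definition dp_scale (c : rat) (P : dpoly) : dpoly := [seq (c * x.1, x.2) | x <- P].
Definition dp_mul (P Q : dpoly) : dpoly :=
  [seq (x.1 * y.1, madd x.2 y.2) | x <- P, y <- Q].
Definition dp_eps : dpoly := dp_var veps.
Definition dp_w : dpoly := dp_var (vw 0).
Definition dp_rho : dpoly := dp_var (vrho 0).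
Definition dp_rhox : dpoly := dp_var (vrho 1).
Definition dp_wx : dpoly := dp_var (vw 1).

(* total x-derivative d_x = sum_i (w^(i+1) d/dw^(i) + rho^(i+1) d/drho^(i));
   jet variable X_v (v >= 1) is sent to X_(v+2); eps is a constant. *)
Definition dp_D_term (x : rat * seq nat) : dpoly :=
  [seq ((nth 0 x.2 v)%:R * x.1,
        incr_nth (set_nth 0 x.2 v (nth 0 x.2 v).-1) v.+2)
  | v <- iota 1 (size x.2)].
Definition dp_D (P : dpoly) : dpoly := flatten (map dp_D_term P).

Definition dp_L (f : dpoly) : dpoly :=
  dp_add (dp_mul dp_w f)
 (dp_add (dp_scale (1/2) (dp_mul (dp_mul dp_rho dp_rho) f))
 (dp_add (dp_scale (1/2) (dp_mul dp_eps (dp_mul dp_rhox f)))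
 (dp_add (dp_mul dp_eps (dp_mul dp_rho (dp_D f)))
         (dp_scale (1/2) (dp_mul (dp_mul dp_eps dp_eps) (dp_D (dp_D f))))))).

Definition dp_KdVop (f : dpoly) : dpoly :=
  dp_add (dp_mul dp_w (dp_D f))
 (dp_add (dp_scale (1/2) (dp_mul dp_wx f))
         (dp_scale (1/8) (dp_mul (dp_mul dp_eps dp_eps) (dp_D (dp_D (dp_D f)))))).

(* K : the KdV differential polynomials K_n, characterised by K_0 = w,
   d_x K_n = 2/(2n+1) (w d_x + w_x/2 + eps^2/8 d_x^3) K_(n-1), and zero
   integration constant (no term free of jet variables). *)
Definition KdV_family (K : nat -> dpoly) : Prop :=
  dp_eq (K 0%N) dp_w /\
  (forall n, dp_eq (dp_D (K n.+1))
                   (dp_scale (2 / (2 * n.+1 + 1)%:R) (dp_KdVop (K n)))) /\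
  (forall n m, (forall v, (0 < v)%N -> nth 0%N m v = 0%N) -> dp_coef (K n) m = 0).

Fixpoint dp_R (K : nat -> dpoly) (n : nat) : dpoly :=
  if n is n'.+1 then
    dp_scale (2 / (2 * n + 1)%:R)
      (dp_add (dp_L (dp_R K n'))
              (dp_add (dp_scale (1/2) (dp_mul dp_rho (K n')))
                      (dp_scale (3/4) (dp_mul dp_eps (dp_D (K n'))))))
  else dp_rho.
Fixpoint dp_Q (n : nat) : dpoly :=
  if n is n'.+1 then dp_scale (1 / (n + 1)%:R) (dp_L (dp_Q n'))
  else dp_add dp_w (dp_add (dp_scale (1/2) (dp_mul dp_rho dp_rho))
                           (dp_scale (1/2) (dp_mul dp_eps dp_rhox))).

(* Evaluation of a differential polynomial at series (w, rho) in       *)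
(* (t, s, eps), with x = t_0, i.e. d_x = d/dt_0.                        *)
Definition jet (w r : ps) (v : nat) : ps :=
  if v == 0%N then ps_var veps
  else if odd v then iter (v.-1)./2 (ps_deriv (vt 0)) w
  else iter (v.-2)./2 (ps_deriv (vt 0)) r.
Definition dp_eval (w r : ps) (P : dpoly) : ps :=
  foldr (fun x acc => ps_add acc
          (ps_scale x.1 (foldr (fun v a => ps_mul a (ps_pow (jet w r v) (nth 0%N x.2 v)))
                               (ps_const 1) (iota 0 (size x.2)))))
        (ps_const 0) P.

(* G = eps log tau_2 = sum_p eps^p F^o_p  (a series in t, s, eps).      *)
Definition only_t0_eps (m : seq nat) : Prop :=
  forall v, v <> veps -> v <> vt 0 -> nth 0%N m v = 0%N.

Definition open_topological (K : nat -> dpoly) (w r G : ps) : Prop :=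
  (forall n, ps_eq (ps_deriv (vt n) w) (ps_deriv (vt 0) (dp_eval w r (K n)))) /\
  (forall n, ps_eq (ps_deriv (vt n) r) (ps_deriv (vt 0) (dp_eval w r (dp_R K n)))) /\
  (forall n, ps_eq (ps_deriv (vs n) w) (ps_const 0)) /\
  (forall n, ps_eq (ps_deriv (vs n) r) (ps_deriv (vt 0) (dp_eval w r (dp_Q n)))) /\
  (* initial condition (w, rho)|_{t_n = x delta_{n,0}, s = 0} = (x, 0) *)
  (forall m, only_t0_eps m -> w (mtrim m) = ps_var (vt 0) (mtrim m)
                           /\ r (mtrim m) = 0) /\
  (* eps d_{t_n} log tau_2 = R_n,  eps d_{s_n} log tau_2 = Q_n *)
  (forall n, ps_eq (ps_deriv (vt n) G) (dp_eval w r (dp_R K n))) /\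
  (forall n, ps_eq (ps_deriv (vs n) G) (dp_eval w r (dp_Q n))) /\
  (* normalisation F^o_p(0,0) = 0 for all p  (eps^p has monomial [:: p]) *)
  (forall p, G (mtrim [:: p]) = 0).

Definition Fo (G : ps) (p : nat) : ps := fun m =>
  if nth 0%N m veps == 0%N then G (mtrim (set_nth 0%N m veps p)) else 0.

Definition open_corr (G : ps) (p : nat) (ks ls : seq nat) : rat :=
  (foldr (fun k f => ps_deriv (vt k) f)
         (foldr (fun l f => ps_deriv (vs l) f) (Fo G p) ls) ks) [::].

(* Main.v *)
Require Import Defs.
From mathcomp Require Import all_boot all_order all_algebra.
From mathcomp Require Import zify ring lra.
Set Implicit Arguments. Unset Strict Implicit. Unset Printing Implicit Defensive.
Import Order.TTheory GRing.Theory Num.Theory.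
Local Open Scope ring_scope.

Lemma nth_mtrim s i : nth 0%N (mtrim s) i = nth 0%N s i.
Proof.
elim: s i => [|x s IH] i //=.
case: ifP => [/andP[/eqP-> /eqP E] | _].
  by case: i => [|i] //=; rewrite -IH E nth_nil.
by case: i => [|i] //=.
Qed.

Lemma mtrim_nil0 s : (forall i, nth 0%N s i = 0%N) -> mtrim s = [::].
Proof.
elim: s => [|x s IH] //= H.
have Hx : x = 0%N by exact: (H 0%N).
rewrite IH; last by move=> i; exact: (H i.+1).
by rewrite Hx.
Qed.

Lemma mtrim_eq s t : (forall i, nth 0%N s i = nth 0%N t i) -> mtrim s = mtrim t.
Proof.
elim: s t => [|x s IH] [|y t] H.
- by [].
- by rewrite [RHS]mtrim_nil0 // => i; rewrite -H nth_nil.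
- by rewrite mtrim_nil0 // => i; rewrite H nth_nil.
- have -> : x = y by exact: (H 0%N).
  by rewrite /= (IH t) // => i; exact: (H i.+1).
Qed.

Lemma mtrimK s : mtrim (mtrim s) = mtrim s.
Proof. by apply: mtrim_eq => i; rewrite nth_mtrim. Qed.

Lemma mtrim_nthP s t : mtrim s = mtrim t <-> (forall i, nth 0%N s i = nth 0%N t i).
Proof.
split; last exact: mtrim_eq.
by move=> E i; rewrite -nth_mtrim E nth_mtrim.
Qed.

Definition lin (c : nat -> int) (s : seq nat) : int :=
  \sum_(i <- iota 0 (size s)) (nth 0%N s i)%:Z * c i.

Lemma linN c s N : (size s <= N)%N ->
  lin c s = \sum_(i <- iota 0 N) (nth 0%N s i)%:Z * c i.
Proof.
move=> HN; rewrite /lin -(subnKC HN) iotaD big_cat /=.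
rewrite [X in _ + X]big1_seq ?addr0 // => i /andP[_].
by rewrite mem_iota add0n => /andP[Hi _]; rewrite nth_default ?mul0r.
Qed.

Lemma lin_add c a b m : (forall i, (nth 0%N a i + nth 0%N b i)%N = nth 0%N m i) ->
  lin c a + lin c b = lin c m.
Proof.
move=> H.
pose N := maxn (size a) (maxn (size b) (size m)).
rewrite (@linN c a N) ?leq_maxl // (@linN c b N); last first.
  by rewrite /N (leq_trans (leq_maxl _ (size m))) // leq_maxr.
rewrite (@linN c m N); last first.
  by rewrite /N (leq_trans (leq_maxr (size b) _)) // leq_maxr.
rewrite -big_split /=; apply: eq_bigr => i _.
by rewrite -H PoszD mulrDl.
Qed.

Lemma lin_nil c : lin c [::] = 0.
Proof. by rewrite /lin big_nil. Qed.

Lemma lin_eq c a b : (forall i, nth 0%N a i = nth 0%N b i) -> lin c a = lin c b.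
Proof.
move=> H; rewrite -[lin c a]addr0 -(lin_nil c); apply: lin_add => i.
by rewrite nth_nil addn0.
Qed.

Lemma lin_mtrim c s : lin c (mtrim s) = lin c s.
Proof. by apply: lin_eq => i; rewrite nth_mtrim. Qed.

Lemma lin_ge0 c s : (forall i, 0 <= c i) -> 0 <= lin c s.
Proof.
move=> H; rewrite /lin; apply: sumr_ge0 => i _.
by apply: mulr_ge0.
Qed.

Lemma nth_mvar i j : nth 0%N (mvar i) j = (i == j) :> nat.
Proof. by rewrite /mvar nth_incr_nth nth_nil addn0. Qed.

Lemma lin_mvar c i : lin c (mvar i) = c i.
Proof.
rewrite (@linN c _ i.+1); last by rewrite /mvar size_incr_nth /= ltnS leqnn.
rewrite (bigD1_seq i) ?iota_uniq ?mem_iota //= nth_mvar eqxx mul1r.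
rewrite big1 ?addr0 // => j /negbTE Hj; by rewrite nth_mvar eq_sym Hj mul0r.
Qed.

Lemma lin_incr c s i : lin c (incr_nth s i) = lin c s + c i.
Proof.
rewrite -lin_mvar; symmetry; apply: lin_add => j.
by rewrite nth_mvar nth_incr_nth addnC.
Qed.

Definition wt := lin (fun i => i%:Z - 3).
Definition dg := lin (fun i => if (2 <= i)%N then 1 else 0).

Lemma dg_ge0 s : 0 <= dg s.
Proof. by apply: lin_ge0 => i; case: ifP. Qed.

Lemma mulzn (n : nat) (x : int) : n%:Z * x = x *+ n.
Proof. by rewrite -mulr_natl natz. Qed.


Lemma mdivs_cons x m :
  mdivs (x :: m) = [seq i :: a | i <- iota 0 x.+1, a <- mdivs m].
Proof. by []. Qed.

Lemma mdivs_mem m b : b \in mdivs m ->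
  size b = size m /\ forall i, (nth 0%N b i <= nth 0%N m i)%N.
Proof.
elim: m b => [|x m IH] b.
  by rewrite /= inE => /eqP->; split=> // i; rewrite nth_nil.
rewrite mdivs_cons => /allpairsP [[i a] [Hi Ha ->]].
have [Hs Hn] := IH a Ha; split; first by rewrite /= Hs.
move: Hi; rewrite mem_iota add0n => /andP[_ Hi].
by case=> [|j] //=; rewrite -ltnS.
Qed.

Lemma mdivs_self m : m \in mdivs m.
Proof.
elim: m => [|x m IH]; first by rewrite /= inE.
rewrite mdivs_cons; apply: (@allpairs_f _ _ _ (fun i a => i :: a)) => //.
by rewrite mem_iota add0n ltnSn.
Qed.

Lemma mdivs_uniq m : uniq (mdivs m).
Proof.
elim: m => [|x m IH] //.
rewrite mdivs_cons; apply: allpairs_uniq; rewrite ?iota_uniq //.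
by move=> [i a] [j c] _ _ /= [-> ->].
Qed.

Lemma nth_msub m b i : size b = size m ->
  nth 0%N (msub m b) i = (nth 0%N m i - nth 0%N b i)%N.
Proof.
move=> Hs; rewrite /msub.
case: (ltnP i (size m)) => Hi.
  rewrite (nth_map (0%N, 0%N)) ?size_zip ?Hs ?minnn // nth_zip //.
by rewrite !nth_default ?size_map ?size_zip ?Hs ?minnn // Hs.
Qed.

Lemma mdivs_split m b i : b \in mdivs m ->
  (nth 0%N b i + nth 0%N (msub m b) i)%N = nth 0%N m i.
Proof.
move=> /mdivs_mem [Hs Hn]; rewrite nth_msub // subnKC //.
Qed.

Lemma ps_mul_const1 f m : ps_mul f (ps_const 1) (mtrim m) = f (mtrim m).
Proof.
rewrite /ps_mul ?mtrimK.
rewrite (bigD1_seq (mtrim m)) ?mdivs_self ?mdivs_uniq //=.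
rewrite /ps_const ?mtrimK.
have -> : mtrim (msub (mtrim m) (mtrim m)) = [::].
  by apply: mtrim_nil0 => i; rewrite nth_msub // subnn.
rewrite eqxx mulr1 ?mtrimK big1_seq ?addr0 // => b /andP[Hb Hbm].
rewrite ?mtrimK.
case: ifP => [/eqP E|]; last by rewrite mulr0.
exfalso; move/negP: Hb; apply; apply/eqP.
have [Hs Hn] := mdivs_mem Hbm.
apply: (@eq_from_nth _ 0%N) => // i _.
have := mdivs_split i Hbm.
have : nth 0%N (msub (mtrim m) b) i = 0%N by rewrite -nth_mtrim E nth_nil.
by move=> ->; rewrite addn0.
Qed.

Definition Hd (d : int) (c : int) (f : ps) : Prop :=
  forall m, dg m <= d -> f (mtrim m) != 0 -> wt m = c.

Lemma wt_mtrim s : wt (mtrim s) = wt s. Proof. exact: lin_mtrim. Qed.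
Lemma dg_mtrim s : dg (mtrim s) = dg s. Proof. exact: lin_mtrim. Qed.

Lemma Hd_add d c f g : Hd d c f -> Hd d c g -> Hd d c (ps_add f g).
Proof.
move=> Hf Hg m Hm; rewrite /ps_add mtrimK.
case: (eqVneq (f (mtrim m)) 0) => [->|]; first by rewrite add0r; apply: Hg.
by move=> H _; apply: Hf.
Qed.

Lemma Hd_scale d c a f : Hd d c f -> Hd d c (ps_scale a f).
Proof.
move=> Hf m Hm; rewrite /ps_scale mtrimK.
case: (eqVneq (f (mtrim m)) 0) => [->|]; first by rewrite mulr0 eqxx.
by move=> H _; apply: Hf.
Qed.

Lemma Hd_const d a : Hd d 0 (ps_const a).
Proof.
move=> m Hm; rewrite /ps_const mtrimK.
case: ifP => [/eqP E _|]; last by rewrite eqxx.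
by rewrite -wt_mtrim E /wt lin_nil.
Qed.

Lemma Hd_var d i : Hd d (i%:Z - 3) (ps_var i).
Proof.
move=> m Hm; rewrite /ps_var mtrimK.
case: ifP => [/eqP E _|]; last by rewrite eqxx.
by rewrite -wt_mtrim E /wt lin_mvar.
Qed.

Lemma sum_neq0 (T : eqType) (r : seq T) (F : T -> rat) :
  \sum_(x <- r) F x != 0 -> exists2 x, x \in r & F x != 0.
Proof.
elim: r => [|y r IH]; first by rewrite big_nil eqxx.
rewrite big_cons; case: (eqVneq (F y) 0) => [->|Hy]; last first.
  by move=> _; exists y; rewrite ?mem_head.
by rewrite add0r => /IH [x Hx Fx]; exists x; rewrite ?inE ?Hx ?orbT.
Qed.

Lemma Hd_mul d a b f g : Hd d a f -> Hd d b g -> Hd d (a + b) (ps_mul f g).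
Proof.
move=> Hf Hg m Hm; rewrite /ps_mul mtrimK => /sum_neq0 [x Hx].
case: (eqVneq (f (mtrim x)) 0) => [->|Hfx]; first by rewrite mul0r eqxx.
case: (eqVneq (g (mtrim (msub (mtrim m) x))) 0) => [->|Hgx _]; first by rewrite mulr0 eqxx.
have Hsp := fun i => mdivs_split i Hx.
have Hdg : dg x + dg (msub (mtrim m) x) = dg m by rewrite -[dg m]dg_mtrim; exact: (lin_add _ Hsp).
have Hwt : wt x + wt (msub (mtrim m) x) = wt m by rewrite -[wt m]wt_mtrim; exact: (lin_add _ Hsp).
have := dg_ge0 x; have := dg_ge0 (msub (mtrim m) x) => H1 H2.
rewrite -Hwt (Hf x _ Hfx) ?(Hg _ _ Hgx) //.
  by apply: le_trans Hm; rewrite -Hdg lerDr.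
by apply: le_trans Hm; rewrite -Hdg lerDl.
Qed.

Lemma Hd_pow d a f n : Hd d a f -> Hd d (a *+ n) (ps_pow f n).
Proof.
move=> Hf; elim: n => [|n IH] /=; first exact: Hd_const.
by rewrite mulrS; apply: Hd_mul.
Qed.

Lemma Hd_deriv1 d c f : Hd d c f -> Hd d (c + 2) (ps_deriv 1 f).
Proof.
move=> Hf m Hm; rewrite /ps_deriv mtrimK.
case: (eqVneq (f (mtrim (incr_nth (mtrim m) 1))) 0) => [->|H _]; first by rewrite mulr0 eqxx.
have := Hf _ _ H.
rewrite /wt lin_incr lin_mtrim /dg lin_incr lin_mtrim /= addr0 => E.
by rewrite -(E Hm); ring.
Qed.


Lemma Hd_iter1 d c f k : Hd d c f -> Hd d (c + 2 *+ k) (iter k (ps_deriv (vt 0)) f).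
Proof.
move=> Hf; elim: k => [|k IH] /=; first by rewrite addr0.
by rewrite mulrS addrCA addrC; apply: Hd_deriv1.
Qed.

Lemma nat_cases v : v = 0%N \/ (exists k, v = k.*2.+1) \/ (exists k, v = k.*2.+2).
Proof.
case: v => [|v]; first by left.
right; rewrite -[v]odd_double_half.
case: (odd v) => /=; [right | left]; exists v./2 => //.
Qed.

Lemma jet0 w r : jet w r 0 = ps_var 0.
Proof. by []. Qed.
Lemma jet_odd w r k : jet w r k.*2.+1 = iter k (ps_deriv (vt 0)) w.
Proof.
rewrite /jet; have -> : (k.*2.+1 == 0%N) = false by [].
have -> : odd k.*2.+1 = true by rewrite oddS odd_double.
change (iter (k.*2)./2 (ps_deriv (vt 0)) w = iter k (ps_deriv (vt 0)) w).
by rewrite half_double.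
Qed.
Lemma jet_even w r k : jet w r k.*2.+2 = iter k (ps_deriv (vt 0)) r.
Proof.
rewrite /jet; have -> : (k.*2.+2 == 0%N) = false by [].
have -> : odd k.*2.+2 = false by rewrite !oddS odd_double.
change (iter (k.*2)./2 (ps_deriv (vt 0)) r = iter k (ps_deriv (vt 0)) r).
by rewrite half_double.
Qed.

Lemma Hd_jet d w r v : Hd d (-2) w -> Hd d (-1) r -> Hd d (v%:Z - 3) (jet w r v).
Proof.
move=> Hw Hr.
case: (nat_cases v) => [->|[[k ->]|[k ->]]].
- by rewrite jet0; exact: (@Hd_var d 0%N).
- rewrite jet_odd.
  have -> : (k.*2.+1)%:Z - 3 = -2 + 2 *+ k by rewrite -addn1 -muln2 PoszD PoszM -mulr_natl natz; ring.
  exact: Hd_iter1.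
- rewrite jet_even.
  have -> : (k.*2.+2)%:Z - 3 = -1 + 2 *+ k by rewrite -addn2 -muln2 PoszD PoszM -mulr_natl natz; ring.
  exact: Hd_iter1.
Qed.

Definition Ef (w r : ps) (s : seq nat) (v : nat) (a : ps) : ps :=
  ps_mul a (ps_pow (jet w r v) (nth 0%N s v)).
Definition E (w r : ps) (s : seq nat) : ps :=
  foldr (Ef w r s) (ps_const 1) (iota 0 (size s)).

Lemma Hd_Efold d w r s L : Hd d (-2) w -> Hd d (-1) r ->
  Hd d (\sum_(v <- L) (nth 0%N s v)%:Z * (v%:Z - 3)) (foldr (Ef w r s) (ps_const 1) L).
Proof.
move=> Hw Hr; elim: L => [|v L IH] /=; first by rewrite big_nil; apply: Hd_const.
rewrite big_cons addrC; apply: Hd_mul => //.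
have -> : (nth 0%N s v)%:Z * (v%:Z - 3) = (v%:Z - 3) *+ nth 0%N s v by rewrite mulzn.
by apply: Hd_pow; apply: Hd_jet.
Qed.

Lemma Hd_E d w r s : Hd d (-2) w -> Hd d (-1) r -> Hd d (wt s) (E w r s).
Proof. by move=> Hw Hr; apply: Hd_Efold. Qed.

Lemma size_mtrim s : (size (mtrim s) <= size s)%N.
Proof.
elim: s => [|x s IH] //=; case: ifP => _ //=.
Qed.

Lemma Efold_ext w r s1 s2 L i1 i2 :
  (forall v, nth 0%N s1 v = nth 0%N s2 v) ->
  (forall m, i1 (mtrim m) = i2 (mtrim m)) ->
  forall m, foldr (Ef w r s1) i1 L (mtrim m) = foldr (Ef w r s2) i2 L (mtrim m).
Proof.
move=> Hs Hi; elim: L => [|v L IH] m //=.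
rewrite /Ef /ps_mul Hs; apply: eq_bigr => a _; by rewrite IH.
Qed.

Lemma Efold_zero w r s L :
  (forall v, v \in L -> nth 0%N s v = 0%N) ->
  forall m, foldr (Ef w r s) (ps_const 1) L (mtrim m) = ps_const 1 (mtrim m).
Proof.
elim: L => [|v L IH] HL m //=.
rewrite /Ef HL ?mem_head //= ps_mul_const1.
by apply: IH => u Hu; apply: HL; rewrite inE Hu orbT.
Qed.

Lemma E_mtrim w r s m : E w r s (mtrim m) = E w r (mtrim s) (mtrim m).
Proof.
rewrite /E -(subnKC (size_mtrim s)) iotaD foldr_cat.
apply: Efold_ext; first by move=> v; rewrite nth_mtrim.
apply: Efold_zero => v; rewrite mem_iota add0n => /andP[Hv _].
by rewrite -nth_mtrim nth_default.
Qed.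

Lemma evalE w r P m :
  dp_eval w r P (mtrim m) = \sum_(x <- P) x.1 * E w r x.2 (mtrim m).
Proof.
elim: P => [|x P IH] /=; first by rewrite big_nil /ps_const; case: ifP.
by rewrite big_cons /ps_add /ps_scale !mtrimK IH addrC.
Qed.

Lemma groupE (P : dpoly) (h : seq nat -> rat) :
  (forall s, h s = h (mtrim s)) ->
  \sum_(x <- P) x.1 * h x.2 =
  \sum_(u <- undup [seq mtrim x.2 | x <- P]) dp_coef P u * h u.
Proof.
move=> Hh; set U := undup _.
have HU : forall u, u \in U -> mtrim u = u.
  by move=> u; rewrite mem_undup => /mapP [x _ ->]; rewrite mtrimK.
transitivity (\sum_(u <- U) \sum_(x <- P) (if mtrim x.2 == mtrim u then x.1 * h x.2 else 0)); last first.
  apply: eq_big_seq => u Hu; rewrite /dp_coef mulr_suml [RHS]big_mkcond /=.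
  apply: eq_bigr => x _; case: ifP => // /eqP E.
  by rewrite Hh E -Hh.
rewrite exchange_big /=; apply: eq_big_seq => x Hx0.
have Hx : mtrim x.2 \in U by rewrite mem_undup; exact: map_f Hx0.
rewrite (bigD1_seq _ Hx) ?undup_uniq //= mtrimK eqxx big1_seq ?addr0 // => u /andP[Hu HuU].
by rewrite (HU u HuU) eq_sym (negbTE Hu).
Qed.

Lemma group_nz (P : dpoly) (h : seq nat -> rat) :
  (forall s, h s = h (mtrim s)) ->
  \sum_(x <- P) x.1 * h x.2 != 0 ->
  exists u, dp_coef P u != 0 /\ h u != 0.
Proof.
move=> Hh; rewrite groupE // => /sum_neq0 [u _].
case: (eqVneq (dp_coef P u) 0) => [->|Hc]; first by rewrite mul0r eqxx.
case: (eqVneq (h u) 0) => [->|Hu]; first by rewrite mulr0 eqxx.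
by exists u.
Qed.

Definition CH (c : int) (P : dpoly) : Prop :=
  forall m, dp_coef P m != 0 -> wt m = c.

Lemma Hd_eval d c w r P : Hd d (-2) w -> Hd d (-1) r -> CH c P ->
  Hd d c (dp_eval w r P).
Proof.
move=> Hw Hr HP m Hm; rewrite evalE.
move=> /(group_nz (h := fun s => E w r s (mtrim m))) [].
  by move=> s; apply: E_mtrim.
move=> u [Hu HE].
by rewrite -(HP _ Hu); exact: (@Hd_E d w r u Hw Hr m Hm HE).
Qed.


Definition TH (c : int) (A : dpoly) : Prop :=
  forall x, x \in A -> x.1 != 0 -> wt x.2 = c.

Lemma nth_madd a b i : nth 0%N (madd a b) i = (nth 0%N a i + nth 0%N b i)%N.
Proof.
rewrite /madd; case: (ltnP i (maxn (size a) (size b))) => Hi.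
  by rewrite nth_mkseq.
rewrite nth_default ?size_mkseq //.
by rewrite !nth_default // (leq_trans _ Hi) // ?leq_maxl ?leq_maxr.
Qed.

Lemma wt_madd a b : wt (madd a b) = wt a + wt b.
Proof. by symmetry; apply: lin_add => i; rewrite nth_madd. Qed.

Lemma TH_var i : TH (i%:Z - 3) (dp_var i).
Proof. by move=> x; rewrite inE => /eqP -> _ /=; rewrite /wt lin_mvar. Qed.

Lemma TH_mul a b A B : TH a A -> TH b B -> TH (a + b) (dp_mul A B).
Proof.
move=> HA HB z /allpairsP [[x y] [Hx Hy ->]] /= Hz.
rewrite wt_madd (HA x) ?(HB y) //.
  by apply: contraNneq Hz => ->; rewrite mulr0.
by apply: contraNneq Hz => ->; rewrite mul0r.
Qed.

Lemma CH_of_TH c A : TH c A -> CH c A.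
Proof.
move=> HA m; rewrite /dp_coef big_mkcond => /sum_neq0 [x Hx].
case: ifP => [/eqP E Hx1|]; last by rewrite eqxx.
by rewrite -wt_mtrim -E wt_mtrim; apply: HA.
Qed.

Lemma coef_cat P Q m : dp_coef (dp_add P Q) m = dp_coef P m + dp_coef Q m.
Proof. by rewrite /dp_coef /dp_add big_cat. Qed.

Lemma CH_add c P Q : CH c P -> CH c Q -> CH c (dp_add P Q).
Proof.
move=> HP HQ m; rewrite coef_cat.
case: (eqVneq (dp_coef P m) 0) => [->|H _]; first by rewrite add0r; apply: HQ.
exact: HP.
Qed.

Lemma coef_scale a P m : dp_coef (dp_scale a P) m = a * dp_coef P m.
Proof. by rewrite /dp_coef /dp_scale big_map mulr_sumr. Qed.

Lemma CH_scale c a P : CH c P -> CH c (dp_scale a P).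
Proof.
move=> HP m; rewrite coef_scale.
case: (eqVneq (dp_coef P m) 0) => [->|H _]; first by rewrite mulr0 eqxx.
exact: HP.
Qed.

Lemma CH_eq c P Q : dp_eq P Q -> CH c P -> CH c Q.
Proof. by move=> E HP m; rewrite -E; apply: HP. Qed.

Lemma CH_mul a c A P : TH a A -> CH c P -> CH (a + c) (dp_mul A P).
Proof.
move=> HA HP m; rewrite /dp_coef /dp_mul big_mkcond big_allpairs_dep /=.
move=> /sum_neq0 [y Hy] /=.
set h := fun s => if mtrim (madd y.2 s) == mtrim m then y.1 else 0.
have -> : \sum_(x <- P) (if mtrim (madd y.2 x.2) == mtrim m then y.1 * x.1 else 0)
        = \sum_(x <- P) x.1 * h x.2.
  by apply: eq_bigr => x _; rewrite /h; case: ifP; rewrite ?mulr0 // mulrC.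
move=> /group_nz [].
  move=> s; rewrite /h.
  have -> : mtrim (madd y.2 (mtrim s)) = mtrim (madd y.2 s) by
    apply: mtrim_eq => i; rewrite !nth_madd nth_mtrim.
  by [].
move=> u [Hu]; rewrite /h; case: ifP => [/eqP E Hy1|]; last by rewrite eqxx.
by rewrite -wt_mtrim -E wt_mtrim wt_madd (HA y) // (HP u).
Qed.

Definition Dv (s : seq nat) (v : nat) : seq nat :=
  incr_nth (set_nth 0%N s v (nth 0%N s v).-1) v.+2.

Lemma nth_Dv s v i :
  nth 0%N (Dv s v) i = ((v.+2 == i) + (if i == v then (nth 0%N s v).-1 else nth 0%N s i))%N.
Proof. by rewrite /Dv nth_incr_nth nth_set_nth. Qed.

Lemma wt_Dv s v : (0 < nth 0%N s v)%N -> wt (Dv s v) = wt s + 2.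
Proof.
move=> Hv; rewrite /wt /Dv lin_incr.
have <- : lin (fun i => i%:Z - 3) (set_nth 0%N s v (nth 0%N s v).-1) + (v%:Z - 3)
          = lin (fun i => i%:Z - 3) s.
  rewrite -(lin_mvar (fun i => i%:Z - 3) v); apply: lin_add => i.
  rewrite nth_set_nth nth_mvar /= eq_sym.
  by case: eqP => [<-|_]; [rewrite addn1 prednK | rewrite addn0].
have -> : (v.+2)%:Z = v%:Z + 2 by rewrite -PoszD addn2.
ring.
Qed.

Definition hD (m : seq nat) (N : nat) (s : seq nat) : rat :=
  \sum_(v <- iota 1 N) (if mtrim (Dv s v) == mtrim m then (nth 0%N s v)%:R else 0).

Lemma hD_ext m N s t : (forall i, nth 0%N s i = nth 0%N t i) -> hD m N s = hD m N t.
Proof.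
move=> H; apply: eq_bigr => v _.
have -> : mtrim (Dv s v) = mtrim (Dv t v) by apply: mtrim_eq => i; rewrite !nth_Dv !H.
by rewrite H.
Qed.

Lemma hD_N m s N : (size s <= N)%N -> hD m (size s) s = hD m N s.
Proof.
move=> HN; rewrite /hD -(subnKC HN) iotaD big_cat /=.
rewrite [X in _ = _ + X]big1_seq ?addr0 // => v /andP[_].
rewrite mem_iota => /andP[Hv _]; rewrite nth_default; last by apply: leq_trans Hv; rewrite leq_addl.
by case: ifP.
Qed.

Lemma hD_mtrim m s : hD m (size s) s = hD m (size (mtrim s)) (mtrim s).
Proof.
rewrite (hD_N m (size_mtrim s)).
by apply: hD_ext => i; rewrite nth_mtrim.
Qed.

Lemma coef_D P m : dp_coef (dp_D P) m = \sum_(x <- P) x.1 * hD m (size x.2) x.2.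
Proof.
rewrite /dp_coef /dp_D big_flatten big_map; apply: eq_bigr => x _.
rewrite /dp_D_term big_map /hD mulr_sumr big_mkcond; apply: eq_bigr => v _ /=.
by case: ifP; rewrite ?mulr0 // mulrC.
Qed.

Lemma CH_D c P : CH c P -> CH (c + 2) (dp_D P).
Proof.
move=> HP m; rewrite coef_D.
move=> /(group_nz (h := fun s => hD m (size s) s)) [].
  by move=> s; apply: hD_mtrim.
move=> u [Hu] /sum_neq0 [v _]; case: ifP => [/eqP E|]; last by rewrite eqxx.
move=> Hn; have Hv : (0 < nth 0%N u v)%N by rewrite lt0n; apply: contraNneq Hn => ->.
by rewrite -wt_mtrim -E wt_mtrim wt_Dv // (HP u).
Qed.


Lemma last_mtrim s : mtrim s != [::] ->
  nth 0%N (mtrim s) (size (mtrim s)).-1 != 0%N.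
Proof.
elim: s => [|x s IH] //=.
case: (eqVneq (mtrim s) [::]) => [E|Hs].
  by rewrite E andbT; case: x.
rewrite andbF /= => _.
have Hsz : (0 < size (mtrim s))%N by rewrite lt0n size_eq0.
by rewrite -(prednK Hsz) /=; apply: IH.
Qed.

Lemma hitV (u s : seq nat) v V :
  (size u = V.+1)%N -> (size s <= size u)%N -> (0 < nth 0%N s v)%N ->
  (0 < nth 0%N u V)%N ->
  mtrim (Dv s v) = mtrim (Dv u V) ->
  v = V /\ forall i, nth 0%N s i = nth 0%N u i.
Proof.
move=> Hu Hs Hv HV /mtrim_nthP E.
have Hs0 : forall i, (size u <= i)%N -> nth 0%N s i = 0%N.
  by move=> i Hi; apply: nth_default; apply: leq_trans Hi.
have Hu0 : forall i, (size u <= i)%N -> nth 0%N u i = 0%N.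
  by move=> i Hi; apply: nth_default.
have EV := E V.+2; rewrite !nth_Dv eqxx in EV.
have H1 : (V.+2 == V) = false by clear; elim: V.
rewrite H1 Hu0 ?Hu // in EV.
have Hvv : v = V.
  move: EV; case: (eqVneq V.+2 v) => [Ev|Hne].
    by move: Hv; rewrite -Ev Hs0 ?Hu.
  rewrite Hs0 ?Hu //; case: eqP => [[]|] //=.
subst v; split => // i; move: (E i); rewrite !nth_Dv.
case: (eqVneq i V) => [->|HiV].
  by rewrite H1 !add0n => E1; rewrite -(prednK Hv) -(prednK HV) E1.
by move/eqP; rewrite eqn_add2l => /eqP.
Qed.

Lemma coef_mtrim P m : dp_coef P (mtrim m) = dp_coef P m.
Proof. by rewrite /dp_coef mtrimK. Qed.

Lemma coef_inU P m : dp_coef P m != 0 -> mtrim m \in undup [seq mtrim x.2 | x <- P].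
Proof.
rewrite /dp_coef big_mkcond => /sum_neq0 [x Hx]; case: ifP => [/eqP E _|]; last by rewrite eqxx.
by rewrite mem_undup -E; apply: map_f.
Qed.

Lemma KL c P : CH (c + 2) (dp_D P) ->
  (forall m, (forall v, (0 < v)%N -> nth 0%N m v = 0%N) -> dp_coef P m = 0) ->
  CH c P.
Proof.
move=> HD Hpure.
set U := undup [seq mtrim x.2 | x <- P].
have HU : forall u, u \in U -> mtrim u = u.
  by move=> u; rewrite mem_undup => /mapP [x _ ->]; rewrite mtrimK.
pose bad u := (dp_coef P u != 0) && (wt u != c).
have core : forall u, u \in U -> bad u ->
    (forall u2, u2 \in U -> bad u2 -> (size u2 <= size u)%N) -> False.
  move=> u Hu /andP[Hc Hw] Hmax.
  have Hut := HU u Hu.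
  have [v Hv1 Hv2] : exists2 v, (0 < v)%N & (0 < nth 0%N u v)%N.
    case: (boolP (all (fun v => nth 0%N u v == 0%N) (iota 1 (size u)))) => [Hall|].
      exfalso; move/negP: Hc; apply; apply/eqP; apply: Hpure => v Hv.
      case: (ltnP v (size u).+1) => Hvs.
        by apply/eqP; move/allP: Hall; apply; rewrite mem_iota Hv add1n.
      by apply: nth_default; apply: leq_trans Hvs.
    move/allPn => [v]; rewrite mem_iota => /andP[Hv _] Hn.
    by exists v => //; rewrite lt0n.
  have Hvs : (v < size u)%N by rewrite ltnNge; apply: contraTN Hv2 => H; rewrite nth_default.
  pose V := (size u).-1.
  have Hsz : size u = V.+1 by rewrite /V prednK //; apply: leq_ltn_trans Hvs.
  have HV : (0 < nth 0%N u V)%N.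
    rewrite lt0n; have := @last_mtrim u; rewrite Hut; apply.
    by apply/eqP => E; move: Hsz; rewrite E.
  set t := Dv u V.
  have Ht : dp_coef (dp_D P) t = 0.
    apply/eqP; apply: contraNT Hw => /HD; rewrite /t wt_Dv // => /addIr ->.
    by rewrite eqxx.
  have Hhit : forall s v', (size s <= size u)%N -> (0 < nth 0%N s v')%N ->
      mtrim (Dv s v') = mtrim t -> v' = V /\ forall i, nth 0%N s i = nth 0%N u i.
    by move=> s v' Hs Hp E; apply: (hitV Hsz Hs Hp HV E).
  move: Ht; rewrite coef_D (@groupE _ (fun s => hD t (size s) s)); last first.
    by move=> s; apply: hD_mtrim.
  rewrite (bigD1_seq u) ?undup_uniq //= big1_seq ?addr0; last first.
    move=> u2 /andP[Hne Hu2].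
    case: (eqVneq (dp_coef P u2) 0) => [->|Hc2]; first by rewrite mul0r.
    rewrite /hD big1_seq ?mulr0 // => v' /andP[_ _].
    case: ifP => // /eqP E'.
    case: (posnP (nth 0%N u2 v')) => [->|Hp] //.
    have Hw2 : wt u2 = wt u.
      have := congr1 wt E'; rewrite !wt_mtrim /t !wt_Dv //.
      by move/addIr.
    have Hb2 : bad u2 by rewrite /bad Hc2 Hw2.
    have [_ Hpw] := Hhit _ _ (Hmax _ Hu2 Hb2) Hp E'.
    exfalso; move/negP: Hne; apply; apply/eqP.
    by rewrite -(HU _ Hu2) -Hut; apply: mtrim_eq.
  rewrite /hD (bigD1_seq V) ?iota_uniq //; last first.
    rewrite mem_iota; move: Hsz Hv1 Hvs; clearbody V; clear; move=> Hsz Hv1 Hvs; rewrite Hsz in Hvs *; apply/andP; split; [ apply: leq_trans Hv1 _; rewrite -ltnS // | by rewrite add1n ltnS leqnSn ].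
  rewrite /= /t eqxx big1_seq ?addr0; last first.
    move=> v' /andP[Hne _]; case: ifP => // /eqP E'.
    case: (posnP (nth 0%N u v')) => [->|Hp] //.
    have [Hvv _] := Hhit _ _ (leqnn _) Hp E'.
    by move: Hne; rewrite Hvv eqxx.
  move/eqP; rewrite mulf_eq0 (negbTE Hc) /= pnatr_eq0 => /eqP H0.
  by move: HV; rewrite H0.
have main : forall n u, u \in U -> bad u ->
    ((\max_(x <- U) size x).+1 - n <= size u)%N -> False.
  elim=> [|n IH] u Hu Hb Hs.
    have := @leq_bigmax_seq _ U xpredT (fun x => size x) u Hu (erefl true).
    by rewrite subn0 in Hs; move=> H; move: (leq_trans Hs H); rewrite ltnn.
  case: (boolP (all (fun u2 => bad u2 ==> (size u2 <= size u)%N) U)) => [Hall|].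
    apply: (core u Hu Hb) => u2 Hu2 Hb2.
    by move/allP: Hall => /(_ u2 Hu2); rewrite Hb2.
  move/allPn => [u2 Hu2]; rewrite negb_imply => /andP[Hb2 Hlt].
  apply: (IH u2 Hu2 Hb2); rewrite -ltnNge in Hlt.
  apply: (leq_trans _ Hlt); move: Hs; generalize (\max_(x <- U) size x) (size u) => a b0; clear; lia.
move=> m Hm; apply/eqP; apply/negPn/negP => Hw.
have Hu : mtrim m \in U by apply: coef_inU.
have Hb : bad (mtrim m) by rewrite /bad coef_mtrim Hm wt_mtrim Hw.
by apply: (main (\max_(x <- U) size x).+1 _ Hu Hb); rewrite subnn.
Qed.


Lemma CH_weq c c' P : CH c P -> c = c' -> CH c' P.
Proof. by move=> H <-. Qed.
Lemma TH_weq c c' P : TH c P -> c = c' -> TH c' P.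
Proof. by move=> H <-. Qed.

Lemma PoszS (n : nat) : (n.+1)%:Z = n%:Z + 1.
Proof. by rewrite -[n.+1]addn1 PoszD. Qed.

Lemma TH_w : TH (-2) dp_w. Proof. exact: TH_var. Qed.
Lemma TH_rho : TH (-1) dp_rho. Proof. exact: TH_var. Qed.
Lemma TH_eps : TH (-3) dp_eps. Proof. exact: TH_var. Qed.
Lemma TH_rhox : TH 1 dp_rhox. Proof. exact: TH_var. Qed.
Lemma TH_wx : TH 0 dp_wx. Proof. exact: TH_var. Qed.

Lemma CH_L c f : CH c f -> CH (c - 2) (dp_L f).
Proof.
move=> Hf; rewrite /dp_L.
apply: CH_add; first by apply: (CH_weq (CH_mul TH_w Hf)); ring.
apply: CH_add.
  apply: CH_scale; apply: (CH_weq (CH_mul (TH_mul TH_rho TH_rho) Hf)); ring.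
apply: CH_add.
  apply: CH_scale; apply: (CH_weq (CH_mul TH_eps (CH_mul TH_rhox Hf))); ring.
apply: CH_add.
  apply: (CH_weq (CH_mul TH_eps (CH_mul TH_rho (CH_D Hf)))); ring.
apply: CH_scale; apply: (CH_weq (CH_mul (TH_mul TH_eps TH_eps) (CH_D (CH_D Hf)))); ring.
Qed.

Lemma CH_KdVop c f : CH c f -> CH c (dp_KdVop f).
Proof.
move=> Hf; rewrite /dp_KdVop.
apply: CH_add; first by apply: (CH_weq (CH_mul TH_w (CH_D Hf))); ring.
apply: CH_add.
  apply: CH_scale; apply: (CH_weq (CH_mul TH_wx Hf)); ring.
apply: CH_scale; apply: (CH_weq (CH_mul (TH_mul TH_eps TH_eps) (CH_D (CH_D (CH_D Hf))))); ring.
Qed.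

Lemma CH_K K : KdV_family K -> forall n, CH (- 2 * n%:Z - 2) (K n).
Proof.
move=> [HK0 [HKS HKc]]; elim=> [|n IH].
  apply: (CH_weq (CH_eq (P := dp_w) _ (CH_of_TH TH_w))); last by ring.
  by move=> m; rewrite HK0.
apply: KL; last exact: HKc.
apply: (CH_eq (P := dp_scale (2 / (2 * n.+1 + 1)%:R) (dp_KdVop (K n)))).
  by move=> m; rewrite HKS.
apply: CH_scale; apply: (CH_weq (CH_KdVop IH)).
rewrite PoszS; ring.
Qed.

Lemma dp_R_S K n : dp_R K n.+1 =
    dp_scale (2 / (2 * n.+1 + 1)%:R)
      (dp_add (dp_L (dp_R K n))
              (dp_add (dp_scale (1/2) (dp_mul dp_rho (K n)))
                      (dp_scale (3/4) (dp_mul dp_eps (dp_D (K n)))))).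
Proof. by []. Qed.
Lemma dp_Q_S n : dp_Q n.+1 = dp_scale (1 / (n.+1 + 1)%:R) (dp_L (dp_Q n)).
Proof. by []. Qed.
Lemma dp_Q_0 : dp_Q 0 = dp_add dp_w (dp_add (dp_scale (1/2) (dp_mul dp_rho dp_rho))
                           (dp_scale (1/2) (dp_mul dp_eps dp_rhox))).
Proof. by []. Qed.

Lemma CH_R K : KdV_family K -> forall n, CH (- 2 * n%:Z - 1) (dp_R K n).
Proof.
move=> HK; elim=> [|n IH].
  by apply: (CH_weq (CH_of_TH TH_rho)); ring.
rewrite dp_R_S; apply: CH_scale; apply: CH_add.
  by apply: (CH_weq (CH_L IH)); rewrite PoszS; ring.
apply: CH_add.
  apply: CH_scale; apply: (CH_weq (CH_mul TH_rho (@CH_K K HK n))).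
  by rewrite PoszS; ring.
apply: CH_scale; apply: (CH_weq (CH_mul TH_eps (CH_D (@CH_K K HK n)))).
by rewrite PoszS; ring.
Qed.

Lemma CH_Q n : CH (- 2 * n%:Z - 2) (dp_Q n).
Proof.
elim: n => [|n IH].
  rewrite dp_Q_0; apply: CH_add; first by apply: (CH_weq (CH_of_TH TH_w)); ring.
  apply: CH_add.
    by apply: CH_scale; apply: (CH_weq (CH_of_TH (TH_mul TH_rho TH_rho))); ring.
  by apply: CH_scale; apply: (CH_weq (CH_of_TH (TH_mul TH_eps TH_rhox))); ring.
rewrite dp_Q_S; apply: CH_scale; apply: (CH_weq (CH_L IH)).
by rewrite PoszS; ring.
Qed.


Definition mdec (m : seq nat) (j : nat) : seq nat :=
  set_nth 0%N (mtrim m) j (nth 0%N m j).-1.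

Lemma nth_mdec m j i : nth 0%N (mdec m j) i = if i == j then (nth 0%N m j).-1 else nth 0%N m i.
Proof. by rewrite /mdec nth_set_nth /= nth_mtrim. Qed.

Lemma mdec_incr m j : (0 < nth 0%N m j)%N -> mtrim (incr_nth (mtrim (mdec m j)) j) = mtrim m.
Proof.
move=> Hj; apply: mtrim_eq => i; rewrite nth_incr_nth nth_mtrim nth_mdec eq_sym.
by case: eqP => [->|_]; rewrite ?add1n ?prednK // add0n.
Qed.

Lemma lin_mdec c m j : (0 < nth 0%N m j)%N -> lin c m = lin c (mdec m j) + c j.
Proof.
move=> Hj; rewrite -lin_incr -[lin c m]lin_mtrim -(mdec_incr Hj) lin_mtrim.
by apply: lin_eq => i; rewrite !nth_incr_nth nth_mtrim.
Qed.

Lemma deriv_mdec f m j : (0 < nth 0%N m j)%N ->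
  ps_deriv j f (mtrim (mdec m j)) = (nth 0%N m j)%:R * f (mtrim m).
Proof.
move=> Hj; rewrite /ps_deriv mtrimK mdec_incr // nth_mtrim nth_mdec eqxx prednK //.
Qed.

Lemma dg_pos m j : (2 <= j)%N -> (0 < nth 0%N m j)%N -> dg m = dg (mdec m j) + 1.
Proof. by move=> H2 Hj; rewrite /dg (lin_mdec _ Hj) H2. Qed.

Lemma dg_zero m : dg m = 0 -> forall j, (2 <= j)%N -> nth 0%N m j = 0%N.
Proof.
move=> H0 j H2; case: (posnP (nth 0%N m j)) => // Hj.
by move: H0; rewrite (dg_pos H2 Hj) => /eqP; rewrite gt_eqF // ltr_pwDr ?dg_ge0.
Qed.

Lemma find_pos m k : (exists2 j, (k <= j)%N & (0 < nth 0%N m j)%N) \/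
                     (forall j, (k <= j)%N -> nth 0%N m j = 0%N).
Proof.
case: (boolP (has (fun j => (k <= j)%N && (0 < nth 0%N m j)%N) (iota 0 (size m)))).
  by move/hasP => [j _ /andP[H1 H2]]; left; exists j.
move/hasPn => H; right => j Hk.
case: (ltnP j (size m)) => Hj; last by rewrite nth_default.
have := H j; rewrite mem_iota add0n Hj /= => /(_ isT).
by rewrite Hk /= lt0n negbK => /eqP.
Qed.

Lemma dg_nz m : dg m != 0 -> exists2 j, (2 <= j)%N & (0 < nth 0%N m j)%N.
Proof.
move=> H; case: (find_pos m 2) => // Hz; exfalso; move/eqP: H; apply.
rewrite /dg /lin big1_seq // => i _; case: ifP => [H2|]; last by rewrite mulr0.
by rewrite Hz.
Qed.

Lemma vt_eq k : vt k = k.*2.+1. Proof. by rewrite /vt -muln2 mulnC addn1. Qed.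
Lemma vs_eq k : vs k = k.*2.+2. Proof. by rewrite /vs -muln2 mulnC addn2. Qed.

Lemma Hd_lower d d' c f : d' <= d -> Hd d c f -> Hd d' c f.
Proof. by move=> Hd H m Hm; apply: H; apply: le_trans Hd. Qed.

Lemma wr_hom (K : nat -> dpoly) (w r G : ps) (HK : KdV_family K)
  (HT : open_topological K w r G) : forall d : nat, Hd d%:Z (-2) w /\ Hd d%:Z (-1) r.
Proof.
have [Hwt [Hrt [Hws [Hrs [Hinit [HGt [HGs HG0]]]]]]] := HT.
have zero_case : forall m, dg m = 0 ->
    (w (mtrim m) != 0 -> wt m = -2) /\ (r (mtrim m) != 0 -> wt m = -1).
  move=> m Hm.
  have Hz := dg_zero Hm.
  have [Hw0 Hr0] : w (mtrim m) = ps_var (vt 0) (mtrim m) /\ r (mtrim m) = 0.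
    apply: Hinit => v H0 H1; apply: Hz.
    by case: v H0 H1 => [|[|v]].
  split; last by rewrite Hr0 eqxx.
  rewrite Hw0 /ps_var mtrimK; case: ifP => [/eqP E _|]; last by rewrite eqxx.
  by rewrite -wt_mtrim E /wt lin_mvar.
have nz_case : forall (e : nat) m, Hd e%:Z (-2) w -> Hd e%:Z (-1) r ->
    dg m <= e%:Z + 1 -> dg m != 0 ->
    (w (mtrim m) != 0 -> wt m = -2) /\ (r (mtrim m) != 0 -> wt m = -1).
  move=> e m Hw Hr Hm Hnz.
  have [j H2 Hj] := dg_nz Hnz.
  have Hdg : dg (mdec m j) <= e%:Z by move: Hm; rewrite (dg_pos H2 Hj) lerD2r.
  have Hwtm : wt m = wt (mdec m j) + (j%:Z - 3) by rewrite /wt (lin_mdec _ Hj).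
  have Hnj : (nth 0%N m j)%:R != 0 :> rat by rewrite pnatr_eq0 -lt0n.
  case: (nat_cases j) => [Ej|[[k Ej]|[k Ej]]].
  - by move: H2; rewrite Ej.
  - have Hk : vt k = j by rewrite vt_eq Ej.
    split => Hne.
    + have := Hwt k (mdec m j); rewrite Hk deriv_mdec // => E.
      have HW := @Hd_deriv1 _ _ _ (Hd_eval Hw Hr (@CH_K K HK k)) _ Hdg.
      rewrite Hwtm (HW _); last by rewrite -E mulf_neq0.
      by rewrite Ej PoszS -muln2 PoszM; ring.
    + have := Hrt k (mdec m j); rewrite Hk deriv_mdec // => E.
      have HW := @Hd_deriv1 _ _ _ (Hd_eval Hw Hr (@CH_R K HK k)) _ Hdg.
      rewrite Hwtm (HW _); last by rewrite -E mulf_neq0.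
      by rewrite Ej PoszS -muln2 PoszM; ring.
  - have Hk : vs k = j by rewrite vs_eq Ej.
    split => Hne.
    + have := Hws k (mdec m j); rewrite Hk deriv_mdec // /ps_const.
      case: ifP => _ /eqP; by rewrite mulf_eq0 (negbTE Hnj) (negbTE Hne).
    + have := Hrs k (mdec m j); rewrite Hk deriv_mdec // => E.
      have HW := @Hd_deriv1 _ _ _ (Hd_eval Hw Hr (@CH_Q k)) _ Hdg.
      rewrite Hwtm (HW _); last by rewrite -E mulf_neq0.
      by rewrite Ej PoszS PoszS -muln2 PoszM; ring.
elim=> [|d [IHw IHr]].
  split => m Hm; have H0 : dg m = 0 by apply/eqP; rewrite eq_le Hm dg_ge0.
    by case: (zero_case m H0).
  by case: (zero_case m H0).
have key : forall m, dg m <= d.+1%:Z ->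
    (w (mtrim m) != 0 -> wt m = -2) /\ (r (mtrim m) != 0 -> wt m = -1).
  move=> m Hm; case: (eqVneq (dg m) 0) => [H0|Hnz]; first exact: zero_case.
  by apply: (nz_case d) => //; rewrite -PoszS.
by split => m Hm; case: (key m Hm).
Qed.



Lemma dg_nat m : exists n : nat, dg m = n%:Z.
Proof. by case: (dg m) (dg_ge0 m) => [n|n] // _; exists n. Qed.

Lemma eval_hom K w r G : KdV_family K -> open_topological K w r G ->
  forall c P, CH c P -> forall m, dp_eval w r P (mtrim m) != 0 -> wt m = c.
Proof.
move=> HK HT c P HP m; have [n En] := dg_nat m.
have [Hw Hr] := wr_hom HK HT n.
by apply: (Hd_eval Hw Hr HP); rewrite En.
Qed.

Lemma G_hom K w r G : KdV_family K -> open_topological K w r G ->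
  forall m, G (mtrim m) != 0 -> wt m = -3.
Proof.
move=> HK HT m HGm.
have [Hwt [Hrt [Hws [Hrs [Hinit [HGt [HGs HG0]]]]]]] := HT.
case: (find_pos m 1) => [[j H1 Hj]|Hz]; last first.
  have E : mtrim m = mtrim [:: nth 0%N m 0].
    apply: mtrim_eq => -[|i] //=; rewrite nth_nil; exact: Hz.
  by move: HGm; rewrite E HG0 eqxx.
have Hwtm : wt m = wt (mdec m j) + (j%:Z - 3) by rewrite /wt (lin_mdec _ Hj).
have Hnj : (nth 0%N m j)%:R != 0 :> rat by rewrite pnatr_eq0 -lt0n.
case: (nat_cases j) => [Ej|[[k Ej]|[k Ej]]].
- by move: H1; rewrite Ej.
- have Hk : vt k = j by rewrite vt_eq Ej.
  have := HGt k (mdec m j); rewrite Hk deriv_mdec // => E.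
  rewrite Hwtm (eval_hom HK HT (@CH_R K HK k) (m := mdec m j)); last by rewrite -E mulf_neq0.
  by rewrite Ej PoszS -muln2 PoszM; ring.
- have Hk : vs k = j by rewrite vs_eq Ej.
  have := HGs k (mdec m j); rewrite Hk deriv_mdec // => E.
  rewrite Hwtm (eval_hom HK HT (@CH_Q k) (m := mdec m j)); last by rewrite -E mulf_neq0.
  by rewrite Ej !PoszS -muln2 PoszM; ring.
Qed.

Definition incrs (js : seq nat) (s : seq nat) : seq nat := foldr (fun j s => incr_nth s j) s js.

Lemma nth_incrs js s i : nth 0%N (incrs js s) i = (nth 0%N s i + count_mem i js)%N.
Proof.
elim: js => [|j js IH] /=; first by rewrite addn0.
by rewrite nth_incr_nth IH addnCA addnA.
Qed.

Lemma derivs (f : ps) js m : exists c : rat,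
  foldr (fun j f => ps_deriv j f) f js (mtrim m) = c * f (mtrim (incrs js m)).
Proof.
elim: js m => [|j js IH] m /=; first by exists 1; rewrite mul1r.
have [c Hc] := IH (incr_nth (mtrim (mtrim m)) j).
exists ((nth 0%N (mtrim m) j).+1%:R * c).
rewrite /ps_deriv Hc mulrA mtrimK; congr (_ * f _).
apply: mtrim_eq => i; rewrite !nth_incrs !nth_incr_nth !nth_mtrim nth_incrs.
by rewrite addnA.
Qed.

Lemma lin_incrs c js s : lin c (incrs js s) = lin c s + \sum_(j <- js) c j.
Proof.
elim: js => [|j js IH] /=; first by rewrite big_nil addr0.
by rewrite lin_incr IH big_cons; ring.
Qed.

Lemma sum_vt ks : \sum_(k <- ks) ((vt k)%:Z - 3) = 2 * (\sum_(k <- ks) k)%N%:Z - 2 * (size ks)%:Z.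
Proof.
elim: ks => [|k ks IH]; first by rewrite !big_nil.
rewrite !big_cons IH /= vt_eq PoszS -muln2 PoszD PoszM PoszS; ring.
Qed.

Lemma sum_vs ls : \sum_(l <- ls) ((vs l)%:Z - 3) = 2 * (\sum_(l <- ls) l)%N%:Z - (size ls)%:Z.
Proof.
elim: ls => [|l ls IH]; first by rewrite !big_nil.
rewrite !big_cons IH /= vs_eq !PoszS -muln2 PoszD PoszM PoszS; ring.
Qed.


Unset Implicit Arguments. Set Strict Implicit.

Theorem mainTheorem6 (K : nat -> dpoly) (w r G : ps) :
  KdV_family K -> open_topological K w r G ->
  forall (p : nat) (ks ls : seq nat),
    (1 <= size ks + size ls)%N ->
    (\sum_(k <- ks) k)%:R + (\sum_(l <- ls) l)%:R - (size ks)%:R - (size ls)%:R / 2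
      != 3 / 2 * (p%:R - 1) :> rat ->
    open_corr G p ks ls = 0.
Proof.
move=> HK HT p ks ls _ Hne.
rewrite /open_corr.
rewrite -(foldr_map vt (fun j f => ps_deriv j f)) -(foldr_map vs (fun j f => ps_deriv j f)) -foldr_cat.
set js := map vt ks ++ map vs ls.
have [c Hc] := derivs (Fo G p) js [::].
rewrite -[[::]]/(mtrim [::]) Hc.
have H0 : count_mem 0%N js = 0%N.
  apply/count_memPn; rewrite mem_cat; apply/norP; split; apply/mapP => -[k _].
    by rewrite vt_eq.
  by rewrite vs_eq.
rewrite /Fo nth_mtrim nth_incrs nth_nil H0 eqxx.
set M2 := set_nth _ _ _ _.
apply/eqP; apply/negPn/negP => Hnz.
have HG : G (mtrim M2) != 0 by apply: contraNneq Hnz => ->; rewrite GRing.mulr0.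
have Hw := G_hom HK HT HG.
have E : wt M2 = wt (incrs js [:: p]).
  apply: lin_eq => i; rewrite /M2 nth_set_nth /= nth_mtrim !nth_incrs nth_nil.
  by case: i => [|i]; rewrite /= ?H0 ?addn0 // nth_nil.
have Hsum : \sum_(j <- js) (j%:Z - 3) =
    (2 * (\sum_(k <- ks) k)%N%:Z - 2 * (size ks)%:Z) + (2 * (\sum_(l <- ls) l)%N%:Z - (size ls)%:Z).
  by rewrite big_cat !big_map sum_vt sum_vs.
have Hl : lin (fun i => i%:Z - 3) [:: p] = p%:Z * (0 - 3).
  by rewrite /lin /= big_cons big_nil GRing.addr0.
rewrite E /wt lin_incrs Hl Hsum in Hw.
have En : ((\sum_(k <- ks) k) + (\sum_(k <- ks) k) + (\sum_(l <- ls) l) + (\sum_(l <- ls) l) + 3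
   = size ks + size ks + size ls + p + p + p)%N.
  move: Hw; generalize (\sum_(k <- ks) k)%N (\sum_(l <- ls) l)%N (size ks) (size ls).
  move=> a b x y; clear; lia.
move/eqP: Hne; apply.
have E2 : ((\sum_(k <- ks) k) + (\sum_(k <- ks) k) + (\sum_(l <- ls) l) + (\sum_(l <- ls) l) + 3)%N%:R
          = (size ks + size ks + size ls + p + p + p)%N%:R :> rat by rewrite En.
rewrite !GRing.natrD in E2.
lra.
Qed.
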